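(* Assume CH. If $\mathcal{I}$ is an unboring ideal, then there is an uncountable Mr\'owka space in $\mathrm{FinBW}(\mathcal{I})$.
   Context: An ideal on an infinite countable set $X$ is a family $\mathcal{I}\subseteq\mathcal{P}(X)$ closed under subsets and finite unions, containing all finite subsets, with $X\notin\mathcal{I}$. A space $X$ is in $\mathrm{FinBW}(\mathcal{I})$ if $X$ is Hausdorff and for every sequence $(x_n)_{n\in\bigcup\mathcal{I}}$ in $X$ there is $A\notin\mathcal{I}$ with $(x_n)_{n\in A}$ convergent in $X$. $\mathrm{Fin}^2$: ideal on $\omega^2$ of all $A$ with only finitely many $n$ such that $\{m:(n,m)\in A\}$ is infinite. $\mathcal{BI}$: ideal on $\omega^3$ of all $A$ for which there is $k$ with $\{(j,l):(i,j,l)\in A\}\in\mathrm{Fin}^2$ for $i<k$ and finite for $i\ge k$. $\mathcal{I}\sqsubseteq\mathcal{J}$: there is a bijection $f:\bigcup\mathcal{J}\to\bigcup\mathcal{I}$ with $f^{-1}[A]\in\mathcal{J}$ for all $A\in\mathcal{I}$. $\mathcal{I}$ is unboring if $\mathcal{BI}\not\sqsubseteq\mathcal{I}$. A Mr\'owka space is $\Phi(\mathcal{A})$ for an infinite almost disjoint family $\mathcal{A}$ of infinite subsets of $\omega$: underlying set $\omega\cup\mathcal{A}\cup\{\infty\}$, points of $\omega$ isolated, basic neighbourhoods of $A\in\mathcal{A}$ are $\{A\}\cup(A\setminus F)$ ($F\subseteq\omega$ finite), of $\infty$ are $\{\infty\}\cup(\mathcal{A}\setminus G)\cup(\omega\setminus(F\cup\bigcup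 G))$ ($F\subseteq\omega$, $G\subseteq\mathcal{A}$ finite). *)

(* Defs.v *)
From HB Require Import structures.
From mathcomp Require Import all_boot all_order.
From mathcomp Require Import boolp classical_sets cardinality topology.
Set Implicit Arguments. Unset Strict Implicit. Unset Printing Implicit Defensive.
Local Open Scope classical_set_scope.

Definition CH : Prop :=
  forall S : set (set nat), countable S \/ (S #= [set: set nat])%card.

Definition is_ideal (X : Type) (I : set (set X)) : Prop :=
  [/\ (forall A B : set X, B `<=` A -> I A -> I B),
      (forall A B : set X, I A -> I B -> I (A `|` B)),
      (forall A : set X, finite_set A -> I A) &
      ~ I [set: X]].

Definition Fin2 : set (set (nat * nat)) :=
  [set A | finite_set [set n | infinite_set [set m | A (n, m)]]].

Definition BI : set (set (nat * (nat * nat))) :=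
  [set A | exists k : nat,
      (forall i, (i < k)%N -> Fin2 [set jl | A (i, jl)]) /\
      (forall i, (k <= i)%N -> finite_set [set jl | A (i, jl)])].

(* I ⊑ J : there is a bijection f : bigcup J -> bigcup I such that
   f^{-1}[A] ∈ J for all A ∈ I.  (bigcup of an ideal = the whole type.) *)
Definition ideal_below (X Y : Type) (I : set (set X)) (J : set (set Y)) : Prop :=
  exists f : Y -> X, bijective f /\ (forall A : set X, I A -> J (f @^-1` A)).

Definition unboring (X : Type) (I : set (set X)) : Prop := ~ ideal_below BI I.

Definition converges_on (X : Type) (T : topologicalType) (x : X -> T) (B : set X) : Prop :=
  exists p : T, forall U : set T, nbhs p U -> finite_set [set n | B n /\ ~ U (x n)].

Definition FinBW (X : Type) (I : set (set X)) (T : topologicalType) : Prop :=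
  hausdorff_space T /\
  forall x : X -> T, exists B : set X, ~ I B /\ converges_on x B.

Definition almost_disjoint_family (A : set (set nat)) : Prop :=
  [/\ infinite_set A,
      (forall a, A a -> infinite_set a) &
      (forall a b, A a -> A b -> a <> b -> finite_set (a `&` b))].

Inductive mpt (A : set (set nat)) : Type :=
  | MN of nat
  | MA of {a : set nat | A a}
  | MInf.

Arguments MN {A}. Arguments MA {A}. Arguments MInf {A}.

(* basic neighbourhoods, parametrised by finite F ⊆ omega, finite G ⊆ A *)
Definition mbasic (A : set (set nat)) (F : set nat) (G : set {a : set nat | A a})
    (p : mpt A) : set (mpt A) :=
  match p with
  | MN n => [set q | q = MN n]
  | MA a => [set q | q = MA a \/ exists n, q = MN n /\ proj1_sig a n /\ ~ F n]
  | MInf => [set q | q = MInf \/ (exists b, q = MA b /\ ~ G b) \/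
              (exists n, q = MN n /\ ~ F n /\ forall b, G b -> ~ proj1_sig b n)]
  end.

Lemma mbasic_anti A F F' G G' p :
  F `<=` F' -> G `<=` G' -> mbasic F' G' p `<=` @mbasic A F G p.
Proof.
move=> FF GG; case: p => [n|a|] q /=.
- by [].
- case=> [->|[n [-> [an Fn]]]]; first by left.
  by right; exists n; split=> //; split=> // /FF.
- case=> [->|[[b [-> Gb]]|[n [-> [Fn Gn]]]]]; first by left.
  + by right; left; exists b; split=> // /GG.
  + right; right; exists n; split=> //; split; first by move/FF.
    by move=> b /GG; apply: Gn.
Qed.

Definition mopen (A : set (set nat)) (U : set (mpt A)) : Prop :=
  forall p, U p -> exists F G, [/\ finite_set F, finite_set G & mbasic F G p `<=` U].

HB.instance Definition _ A := gen_eqMixin (mpt A).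
HB.instance Definition _ A := gen_choiceMixin (mpt A).

Lemma mopenT A : mopen [set: mpt A].
Proof. by move=> p _; exists set0, set0; split=> //; exact: finite_set0. Qed.

Lemma mopenI A : setI_closed (@mopen A).
Proof.
move=> U V oU oV p [Up Vp].
have [F1 [G1 [fF1 fG1 sU]]] := oU p Up.
have [F2 [G2 [fF2 fG2 sV]]] := oV p Vp.
exists (F1 `|` F2), (G1 `|` G2); split; [by rewrite finite_setU | by rewrite finite_setU | ].
move=> q bq; split.
- by apply: sU; apply: (mbasic_anti _ _ bq) => x Hx; left.
- by apply: sV; apply: (mbasic_anti _ _ bq) => x Hx; right.
Qed.

Lemma mopen_bigU A (J : Type) (f : J -> set (mpt A)) :
  (forall i, mopen (f i)) -> mopen (\bigcup_i f i).
Proof.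
move=> hf p [i _ fip]; have [F [G [fF fG s]]] := hf i p fip.
by exists F, G; split=> // q /s fq; exists i.
Qed.

HB.instance Definition _ A :=
  isOpenTopological.Build (mpt A) (@mopenT A) (@mopenI A) (@mopen_bigU A).

Definition mrowka (A : set (set nat)) : topologicalType := mpt A.

(* Main.v *)
Require Import Defs.
From HB Require Import structures.
From mathcomp Require Import all_boot all_order.
From mathcomp Require Import boolp classical_sets cardinality topology.
From mathcomp Require Import wochoice.
Local Open Scope classical_set_scope.
Set Implicit Arguments. Unset Strict Implicit. Unset Printing Implicit Defensive.

Section IdealFacts.
Variables (X : Type) (I : set (set X)) (hI : is_ideal I).

Lemma idS (A B : set X) : B `<=` A -> I A -> I B.
Proof. by case: hI => h _ _ _; apply: h. Qed.

Lemma idU (A B : set X) : I A -> I B -> I (A `|` B).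
Proof. by case: hI => _ h _ _; apply: h. Qed.

Lemma idF (A : set X) : finite_set A -> I A.
Proof. by case: hI => _ _ h _; apply: h. Qed.

Lemma idT : ~ I [set: X].
Proof. by case: hI. Qed.

Lemma id0 : I set0.
Proof. by apply: idF; exact: finite_set0. Qed.

Lemma idU3 (A B C : set X) : I A -> I B -> I C -> I (A `|` B `|` C).
Proof. by move=> ? ? ?; apply: idU => //; apply: idU. Qed.

Lemma id_bigcup_seq (T : eqType) (s : seq T) (F : T -> set X) :
  (forall k, k \in s -> I (F k)) -> I (\bigcup_(k in [set` s]) F k).
Proof.
elim: s => [|a s IH] H.
  by apply: (idS (A := set0)); [move=> x [k /= ]; rewrite in_nil|exact: id0].
apply: (idS (A := F a `|` \bigcup_(k in [set` s]) F k)).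
  move=> x [k /=]; rewrite in_cons => /orP[/eqP->|ks] Fx; first by left.
  by right; exists k.
apply: idU; first by apply: H; rewrite in_cons eqxx.
by apply: IH => k ks; apply: H; rewrite in_cons ks orbT.
Qed.

Lemma id_bigcup_fin (T : choiceType) (D : set T) (F : T -> set X) :
  finite_set D -> (forall k, D k -> I (F k)) -> I (\bigcup_(k in D) F k).
Proof.
move=> fD H; rewrite -(fset_setK fD).
apply: id_bigcup_seq => k; rewrite in_fset_set // inE; exact: H.
Qed.

Lemma positive_infinite (A : set X) : ~ I A -> infinite_set A.
Proof. by move=> nA fA; apply: nA; apply: idF. Qed.

Lemma positive_nonempty (A : set X) : ~ I A -> exists x, A x.
Proof.
move=> nA; apply: contra_notP nA => /forallNP h.
apply: (idS (A := set0)); first by move=> x /h.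
exact: id0.
Qed.

End IdealFacts.

Lemma fin_image_sub (T U : Type) (A : set T) (B : set U) (h : T -> U) :
  finite_set A -> B `<=` h @` A -> finite_set B.
Proof. by move=> fA BA; apply: sub_finite_set BA (finite_image _ fA). Qed.

Lemma infinite_image_fto (T U : Type) (B : set T) (g : T -> U) :
  infinite_set B -> (forall m, finite_set (B `&` g @^-1` [set m])) ->
  infinite_set (g @` B).
Proof.
move=> iB fib fim; apply: iB.
apply: (sub_finite_set (B := \bigcup_(m in g @` B) (B `&` g @^-1` [set m]))).
  by move=> x Bx; exists (g x); [exists x|].
by apply: bigcup_finite => // m _; apply: fib.
Qed.


Lemma enum_inf (T : Type) (S : set T) : countable S -> infinite_set S ->
  exists (f : T -> nat) (g : nat -> T),
    (forall x, S x -> g (f x) = x) /\ (forall n, S (g n) /\ f (g n) = n).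
Proof.
move=> cS iS.
have /card_set_bijP [f [ff fi fs]] := eq_card_nat cS iS.
have hs : forall n, exists x, S x /\ f x = n.
  by move=> n; have [x Sx <-] := fs n I; exists x.
have [g hg] := choice hs.
exists f, g; split; last by move=> n; have [] := hg n.
move=> x Sx; apply: fi; rewrite ?inE //; first by case: (hg (f x)).
by case: (hg (f x)).
Qed.

Lemma fin_empty (T : Type) (A : set T) : (forall x, ~ A x) -> finite_set A.
Proof. by move=> h; apply: (sub_finite_set (B := set0)) => //; exact: finite_set0. Qed.

Lemma infinite_inj_img (T U : Type) (A : set T) (f : T -> U) :
  infinite_set A -> {in A &, injective f} -> infinite_set (f @` A).
Proof. by move=> iA inj; rewrite (eq_finite_set (inj_card_eq inj)). Qed.

Lemma sig_eqP (T : Type) (P : T -> Prop) (b g : {a | P a}) :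
  proj1_sig b = proj1_sig g -> b = g.
Proof. by case: b g => [b hb] [g hg] /= e; subst; congr exist. Qed.

Section Mrowka.
Variable A : set (set nat).

Lemma nbhs_basic (p : mrowka A) (U : set (mrowka A)) : nbhs p U ->
  exists F G, [/\ finite_set F, finite_set G & mbasic F G p `<=` U].
Proof.
rewrite nbhsE => -[B [oB Bp] BU].
have [F [G [fF fG sB]]] := (oB : mopen B) p Bp.
by exists F, G; split => // z /sB /BU.
Qed.

Lemma mbasic_self F G (p : mrowka A) : mbasic F G p p.
Proof. by case: p => [n|a|] /=; [|left|left]. Qed.

Hypothesis hAD : forall a b, A a -> A b -> a <> b -> finite_set (a `&` b).

Lemma mbasic_open F G (p : mrowka A) : finite_set F -> finite_set G ->
  open (mbasic F G p).
Proof.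
move=> fF fG; change (mopen (mbasic F G p)) => q bq; case: q bq => [n|b|] bq.
- by exists set0, set0; split; [exact: finite_set0|exact: finite_set0|move=> z /= ->].
- case: p bq => [n|a|] /=.
  + by move=> e.
  + case=> [[->]|[n [//]]].
    by exists F, G; split => // z.
  + case=> [//|[[b' [[<-] nG]]|[n [//]]]].
    exists (F `|` (\bigcup_(g in G) (proj1_sig b `&` proj1_sig g))), set0; split.
    * rewrite finite_setU; split => //; apply: bigcup_finite => // g Gg.
      apply: hAD; [exact: (proj2_sig b)|exact: (proj2_sig g)|].
      by move=> ebg; apply: nG; have -> : b = g by apply: sig_eqP.
    * exact: finite_set0.
    * move=> z /= [->|[k [-> [bk nF]]]]; first by right; left; exists b.
      right; right; exists k; split => //; split; first by move=> Fk; apply: nF; left.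
      by move=> g Gg gk; apply: nF; right; exists g.
- case: p bq => [n|a|] /=.
  + by move=> e.
  + by case=> [e|[n [e _]]].
  + by move=> _; exists F, G; split.
Qed.

Lemma nbhs_mbasic F G (p : mrowka A) : finite_set F -> finite_set G ->
  nbhs p (mbasic F G p).
Proof.
move=> fF fG; apply: open_nbhs_nbhs; split; first exact: mbasic_open.
exact: mbasic_self.
Qed.

Lemma sep_aux (p q : mrowka A) : p <> q ->
  exists F1 G1 F2 G2, [/\ finite_set F1, finite_set G1, finite_set F2, finite_set G2 &
    forall z, mbasic F1 G1 p z -> mbasic F2 G2 q z -> False].
Proof.
move=> npq.
have f0 := finite_set0 nat.
have g0 := finite_set0 {a : set nat | A a}.
case: p npq => [n|a|] npq.
- exists set0, set0, [set n], set0; split => //.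
  move=> z /= ->; case: q npq => [m|b|] /= npq.
  + by case=> e; apply: npq; rewrite e.
  + by case=> [//|[k [[->] [_ /(_ erefl)]]]].
  + by case=> [//|[[b [//]]|[k [[->] [/(_ erefl)]]]]].
- case: q npq => [m|b|] npq.
  + exists [set m], set0, set0, set0; split => //.
    by move=> z h1 /= e; rewrite e /= in h1; move: h1; case=> [//|[k [[->] [_ /(_ erefl)]]]].
  + have nab : proj1_sig a <> proj1_sig b by move=> e; apply: npq; congr MA; apply: sig_eqP.
    have fab := hAD (proj2_sig a) (proj2_sig b) nab.
    exists (proj1_sig a `&` proj1_sig b), set0, (proj1_sig a `&` proj1_sig b), set0; split => //.
    move=> z /= [->|[k [-> [ak nk]]]].
      by case=> [[e]|[k [//]]]; apply: npq; rewrite e.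
    by case=> [//|[k' [[<-] [bk _]]]]; apply: nk.
  + exists set0, set0, set0, [set a]; split => //.
    move=> z /= [->|[k [-> [ak _]]]].
      by case=> [//|[[b [[->] /(_ erefl)]]|[k [//]]]].
    by case=> [//|[[b [//]]|[k' [[<-] [_ /(_ a erefl)]]]]].
- case: q npq => [m|b|] npq.
  + exists [set m], set0, set0, set0; split => //.
    by move=> z h1 /= e; rewrite e /= in h1; move: h1; case=> [//|[[b [//]]|[k [[<-] [/(_ erefl)]]]]].
  + exists set0, [set b], set0, set0; split => //.
    move=> z h1 /= [e|[k [e [bk _]]]]; rewrite e /= in h1; move: h1.
      by case=> [//|[[b' [[->] /(_ erefl)]]|[k [//]]]].
    by case=> [//|[[b' [//]]|[k' [[<-] [_ /(_ b erefl)]]]]].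
  + by exfalso; apply: npq.
Qed.

Lemma mrowka_hausdorff : hausdorff_space (mrowka A).
Proof.
move=> p q cl; case: (pselect (p = q)) => // npq; exfalso.
have [F1 [G1 [F2 [G2 [f1 g1 f2 g2 dis]]]]] := sep_aux npq.
move: cl => /(_ (mbasic F1 G1 p) (mbasic F2 G2 q)).
move=> /(_ (nbhs_mbasic _ f1 g1) (nbhs_mbasic _ f2 g2)) [z [z1 z2]].
exact: dis z1 z2.
Qed.

End Mrowka.

Section Conv.
Variables (A : set (set nat)) (X : Type) (x : X -> mrowka A).

Lemma conv_const (B : set X) v : (forall n, B n -> x n = v) -> converges_on x B.
Proof.
move=> h; exists v => U /nbhs_singleton Uv.
by apply: fin_empty => n [Bn nU]; apply: nU; rewrite h.
Qed.

Lemma conv_inf (B : set X) : (forall n, B n -> exists a, x n = MA a) ->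
  (forall a, finite_set [set n | B n /\ x n = MA a]) -> converges_on x B.
Proof.
move=> hB hf; exists MInf => U /nbhs_basic [F [G [fF fG sU]]].
apply: (sub_finite_set (B := \bigcup_(a in G) [set n | B n /\ x n = MA a])).
  move=> n [Bn nU]; have [a e] := hB n Bn.
  case: (pselect (G a)) => Ga; first by exists a.
  by exfalso; apply: nU; apply: sU; rewrite e; right; left; exists a.
by apply: bigcup_finite.
Qed.

Lemma conv_MA (B : set X) (c : {a | A a}) (g : X -> nat) :
  (forall n, B n -> x n = MN (g n) /\ proj1_sig c (g n)) ->
  (forall m, finite_set [set n | B n /\ g n = m]) -> converges_on x B.
Proof.
move=> hB hf; exists (MA c) => U /nbhs_basic [F [G [fF fG sU]]].
apply: (sub_finite_set (B := \bigcup_(m in F) [set n | B n /\ g n = m])).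
  move=> n [Bn nU]; have [e cg] := hB n Bn.
  case: (pselect (F (g n))) => Fg; first by exists (g n).
  by exfalso; apply: nU; apply: sU; rewrite e; right; exists (g n).
by apply: bigcup_finite.
Qed.

End Conv.

Definition BIshape (X : Type) (p s : X -> nat) (A : set X) :=
  finite_set [set k | infinite_set (A `&` [set x | p x = k])] /\
  finite_set [set i | infinite_set (A `&` [set x | s x = i])].

Definition Struct (X : Type) (I : set (set X)) (p s : X -> nat) :=
  (forall x y, p x = p y -> s x = s y) /\ (forall A, BIshape p s A -> I A).

Section StructF.
Variables (X : Type) (I : set (set X)) (hI : is_ideal I) (p s : X -> nat).

Definition SF1 := forall k, I [set x | p x = k].
Definition SF2 := forall i (A : set X), A `<=` [set x | s x = i] ->
  (forall k, finite_set (A `&` [set x | p x = k])) -> I A.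
Definition SF3 := forall A : set X,
  (forall i, finite_set (A `&` [set x | s x = i])) -> I A.

Lemma Struct_F : Struct I p s -> [/\ SF1, SF2 & SF3].
Proof.
case=> nest P; split.
- move=> k; apply: P; split.
    apply: (sub_finite_set (B := [set k])); last exact: finite_set1.
    move=> k' /= inf; apply: contra_notP inf => nk; apply: (sub_finite_set (B := set0)).
      by move=> x [/= -> ]; move/esym. 
    exact: finite_set0.
  case: (pselect (exists y, p y = k)) => [[y py]|ny].
    apply: (sub_finite_set (B := [set s y])); last exact: finite_set1.
    move=> i /= inf; apply: contra_notP inf => ni; apply: (sub_finite_set (B := set0)).
      move=> x [px sx]; apply: ni; rewrite -sx; apply: nest; by rewrite px py.
    exact: finite_set0.
  apply: (sub_finite_set (B := set0)); last exact: finite_set0.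
  move=> i /= inf; apply: inf; apply: (sub_finite_set (B := set0)); last exact: finite_set0.
  by move=> x [px _]; apply: ny; exists x.
- move=> i A Ai fA; apply: P; split.
    apply: (sub_finite_set (B := set0)); last exact: finite_set0.
    by move=> k /= inf; apply: inf; apply: fA.
  apply: (sub_finite_set (B := [set i])); last exact: finite_set1.
  move=> j /= inf; apply: contra_notP inf => nj; apply: (sub_finite_set (B := set0)).
    by move=> x [/Ai /= -> ]; move/esym.
  exact: finite_set0.
- move=> A fA; apply: P; split; last first.
    apply: (sub_finite_set (B := set0)); last exact: finite_set0.
    by move=> i /= inf; apply: inf; apply: fA.
  apply: (sub_finite_set (B := set0)); last exact: finite_set0.
  move=> k /= inf; apply: inf.
  case: (pselect (exists y, A y /\ p y = k)) => [[y [Ay py]]|ny].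
    apply: (sub_finite_set (B := A `&` [set x | s x = s y])); last exact: fA.
    by move=> x [Ax px]; split => //; apply: nest; rewrite px py.
  apply: (sub_finite_set (B := set0)); last exact: finite_set0.
  by move=> x [Ax px]; apply: ny; exists x.
Qed.

Lemma F_Struct : (forall x y, p x = p y -> s x = s y) -> SF1 -> SF2 -> SF3 ->
  Struct I p s.
Proof.
move=> nest F1 F2 F3; split => // A [fK fS].
set KF := [set k | infinite_set (A `&` [set x | p x = k])] in fK.
set KS := [set i | infinite_set (A `&` [set x | s x = i])] in fS.
pose U1 := \bigcup_(k in KF) [set x | p x = k].
pose A1 := A `\` U1.
pose U2 := \bigcup_(i in KS) (A1 `&` [set x | s x = i]).
pose A2 := A1 `\` U2.
apply: (idS hI (A := U1 `|` U2 `|` A2)).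
  move=> x Ax; case: (pselect (U1 x)) => h1; first by left; left.
  case: (pselect (U2 x)) => h2; first by left; right.
  by right; split => //; split.
apply: idU3 => //.
- by apply: id_bigcup_fin => // k _; apply: F1.
- apply: id_bigcup_fin => // i _; apply: (F2 i); first by move=> x [].
  move=> k; case: (pselect (KF k)) => hk.
    apply: (sub_finite_set (B := set0)); last exact: finite_set0.
    by move=> x [[[Ax nU] _] px]; apply: nU; exists k.
  apply: contra_notP hk => inf; apply: contra_not inf.
  by apply: sub_finite_set => x [[[Ax _] _] px].
- apply: F3 => i; case: (pselect (KS i)) => hi.
    apply: (sub_finite_set (B := set0)); last exact: finite_set0.
    by move=> x [[A1x nU2] sx]; apply: nU2; exists i.
  apply: contra_notP hi => inf; apply: contra_not inf.
  by apply: sub_finite_set => x [[[Ax _] _] sx].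
Qed.

End StructF.

Lemma half_odd n : (n.*2.+1)./2 = n. Proof. by rewrite /= uphalf_double. Qed.
Lemma half_even n : (n.*2)./2 = n. Proof. by rewrite doubleK. Qed.
Lemma odd_neq_even a b : a.*2.+1 <> b.*2.
Proof. by move=> /(congr1 odd); rewrite /= !odd_double. Qed.



Section Normalize.
Variables (X : Type) (I : set (set X)) (hI : is_ideal I) (p s : X -> nat).
Hypothesis hS : Struct I p s.

Let nest := hS.1.
Let F1 : SF1 I p := let: And3 a _ _ := Struct_F hS in a.
Let F2 : SF2 I p s := let: And3 _ a _ := Struct_F hS in a.
Let F3 : SF3 I s := let: And3 _ _ a := Struct_F hS in a.

Definition InfF k := infinite_set [set x | p x = k].
Definition Nk i := [set k | InfF k /\ exists y, p y = k /\ s y = i].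
Definition Big i := infinite_set (Nk i).
Definition kmin i := xget 0%N (Nk i).
Definition SmallInf i := ~ Big i /\ infinite_set [set x | s x = i].
Definition TRow := infinite_set SmallInf.
Definition i0 := xget 0%N SmallInf.
Definition ib := xget 0%N Big.

Definition nrow x := if `[< Big (s x) >] then (s x).*2.+1
  else if `[< TRow >] then 0%N else ib.*2.+1.
Definition npiece x := if `[< Big (s x) >] then
    (if `[< InfF (p x) >] then (p x).*2.+1 else (kmin (s x)).*2.+1)
  else if `[< TRow >] then
    (if `[< infinite_set [set y | s y = s x] >] then (s x).*2 else i0.*2)
  else (kmin ib).*2.+1.

Lemma N_sec i k y : Nk i k -> p y = k -> s y = i.
Proof. by move=> [_ [z [pz sz]]] py; rewrite -sz; apply: nest; rewrite py pz. Qed.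

Lemma L_Z i : I [set x | s x = i /\ ~ InfF (p x)].
Proof.
apply: (F2 (i := i)); first by move=> x [].
move=> k; case: (pselect (InfF k)) => hk.
  by apply: fin_empty => x [[_ nf] px]; apply: nf; rewrite px.
by apply: contra_notP hk => inf; apply: contra_not inf; apply: sub_finite_set => x [].
Qed.

Lemma L_small i : ~ Big i -> I [set x | s x = i].
Proof.
move=> nb; have fN : finite_set (Nk i) by apply: contra_notP nb.
apply: (idS hI (A := \bigcup_(k in Nk i) [set x | p x = k] `|`
                     [set x | s x = i /\ ~ InfF (p x)])).
  move=> x sx; case: (pselect (InfF (p x))) => h; last by right.
  by left; exists (p x) => //; split => //; exists x.
by apply: (idU hI) => //; [apply: (id_bigcup_fin hI) => // k _; apply: F1|apply: L_Z].
Qed.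

Lemma L_finsec : I [set x | finite_set [set y | s y = s x]].
Proof.
apply: F3 => i; case: (pselect (finite_set [set y | s y = i])) => h.
  by apply: sub_finite_set h => x [].
by apply: fin_empty => x [fx sx]; apply: h; rewrite -sx.
Qed.

Lemma L_smallpart : ~ TRow -> I [set x | ~ Big (s x)].
Proof.
move=> nT; have fS : finite_set SmallInf by apply: contra_notP nT.
apply: (idS hI (A := \bigcup_(i in SmallInf) [set x | s x = i] `|`
                     [set x | finite_set [set y | s y = s x]])).
  move=> x nb; case: (pselect (finite_set [set y | s y = s x])) => h; first by right.
  by left; exists (s x).
apply: (idU hI); last exact: L_finsec.
by apply: (id_bigcup_fin hI) => // i [nb _]; apply: L_small.
Qed.

Lemma L_ib : ~ TRow -> Big ib.
Proof.
move=> nT; rewrite /ib; apply: xgetPex.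
apply: contra_notP (idT hI) => /forallNP nb.
apply: (idS hI (A := [set x | ~ Big (s x)])); first by move=> x _; apply: nb.
exact: L_smallpart.
Qed.

Lemma L_kmin i : Big i -> Nk i (kmin i).
Proof. by move=> b; apply: xgetPex; apply: infinite_setN0. Qed.

Lemma L_i0 : TRow -> SmallInf i0.
Proof. by move=> t; apply: xgetPex; apply: infinite_setN0. Qed.

Lemma np1 y : Big (s y) -> InfF (p y) ->
  npiece y = (p y).*2.+1 /\ nrow y = (s y).*2.+1.
Proof. by move=> b f; rewrite /npiece /nrow (asboolT b) (asboolT f). Qed.
Lemma np2 y : Big (s y) -> ~ InfF (p y) ->
  npiece y = (kmin (s y)).*2.+1 /\ nrow y = (s y).*2.+1.
Proof. by move=> b f; rewrite /npiece /nrow (asboolT b) (asboolF f). Qed.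
Lemma np3 y : ~ Big (s y) -> TRow -> infinite_set [set z | s z = s y] ->
  npiece y = (s y).*2 /\ nrow y = 0%N.
Proof. by move=> b t f; rewrite /npiece /nrow (asboolF b) (asboolT t) (asboolT f). Qed.
Lemma np4 y : ~ Big (s y) -> TRow -> finite_set [set z | s z = s y] ->
  npiece y = i0.*2 /\ nrow y = 0%N.
Proof.
move=> b t f; rewrite /npiece /nrow (asboolF b) (asboolT t) asboolF //.
Qed.
Lemma np5 y : ~ Big (s y) -> ~ TRow ->
  npiece y = (kmin ib).*2.+1 /\ nrow y = ib.*2.+1.
Proof. by move=> b t; rewrite /npiece /nrow (asboolF b) (asboolF t). Qed.

Lemma npiece_cases x :
  (exists k, npiece x = k.*2.+1 /\ InfF k /\
     (forall y, p y = k -> npiece y = k.*2.+1 /\ nrow y = nrow x)) \/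
  (exists i, npiece x = i.*2 /\ SmallInf i /\ nrow x = 0%N /\
     (forall y, s y = i -> npiece y = i.*2 /\ nrow y = 0%N)).
Proof.
case: (pselect (Big (s x))) => bx.
- case: (pselect (InfF (p x))) => fx.
  + left; exists (p x); have [-> ->] := np1 bx fx; split => //; split => // y py.
    have sy : s y = s x by apply: nest; rewrite py.
    have by' : Big (s y) by rewrite sy.
    have fy : InfF (p y) by rewrite py.
    by have [-> ->] := np1 by' fy; rewrite py sy.
  + left; have nk := L_kmin bx; exists (kmin (s x)); have [-> ->] := np2 bx fx.
    split => //; split; first by case: nk.
    move=> y py; have sy : s y = s x by apply: (N_sec nk).
    have by' : Big (s y) by rewrite sy.
    have fy : InfF (p y) by rewrite py; case: nk.
    by have [-> ->] := np1 by' fy; rewrite py sy.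
- case: (pselect TRow) => t.
  + right; case: (pselect (infinite_set [set z | s z = s x])) => ix.
    * exists (s x); have [-> ->] := np3 bx t ix; split => //; split; first by split.
      split => // y sy; rewrite -sy; apply: np3 => //; by rewrite sy.
    * have fx : finite_set [set z | s z = s x] by apply: contra_notP ix.
      have [nb0 ii0] := L_i0 t; exists i0; have [-> ->] := np4 bx t fx.
      split => //; split => //; split => //.
      by move=> y sy; rewrite -sy; apply: np3 => //; rewrite sy.
  + left; have bi := L_ib t; have nk := L_kmin bi; exists (kmin ib).
    have [-> ->] := np5 bx t.
    split => //; split; first by case: nk.
    move=> y py; have sy : s y = ib by apply: (N_sec nk).
    have by' : Big (s y) by rewrite sy.
    have fy : InfF (p y) by rewrite py; case: nk.
    by have [-> ->] := np1 by' fy; rewrite py sy.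
Qed.

Lemma nnest x y : npiece x = npiece y -> nrow x = nrow y.
Proof.
case: (npiece_cases x) => [[k [ex [ik hx]]]|[i [ex [_ [rx _]]]]];
case: (npiece_cases y) => [[k' [ey [_ hy]]]|[i' [ey [_ [ry _]]]]];
rewrite ex ey.
- move=> /eq_add_S /double_inj ek; subst k'.
  have [z pz] := infinite_setN0 ik.
  by rewrite -(hx z pz).2 (hy z pz).2.
- by move/odd_neq_even.
- by move/esym/odd_neq_even.
- by rewrite rx ry.
Qed.

Lemma W1_I k : I [set x | ~ InfF (p x) /\ Nk (s x) k].
Proof.
case: (pselect (exists i, Nk i k)) => [[i nik]|ni].
  apply: (idS hI (A := [set x | s x = i /\ ~ InfF (p x)])); last exact: L_Z.
  move=> x [nf nxk]; split => //.
  have [_ [y [py sy]]] := nik; rewrite -sy; symmetry; exact: (N_sec nxk).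
apply: (idS hI (A := set0)); last exact: id0.
by move=> x [_ h]; apply: ni; exists (s x).
Qed.

Lemma W2_I i : I [set x | ~ Big (s x) /\ s x = i].
Proof.
case: (pselect (Big i)) => b.
  by apply: (idS hI (A := set0)); [move=> x [nb sx]; apply: nb; rewrite sx|exact: id0].
by apply: (idS hI (A := [set x | s x = i])); [move=> x []|exact: L_small].
Qed.

Lemma W4_I : I [set x | ~ TRow /\ ~ Big (s x)].
Proof.
case: (pselect TRow) => t.
  by apply: (idS hI (A := set0)); [move=> x []|exact: id0].
by apply: (idS hI (A := [set x | ~ Big (s x)])); [move=> x []|exact: L_smallpart].
Qed.

Lemma nF1 : SF1 I npiece.
Proof.
move=> L.
apply: (idS hI (A := [set x | p x = L./2] `|` [set x | ~ InfF (p x) /\ Nk (s x) L./2]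
   `|` ([set x | ~ Big (s x) /\ s x = L./2] `|` [set x | finite_set [set y | s y = s x]])
   `|` [set x | ~ TRow /\ ~ Big (s x)])).
  move=> x /= <-.
  case: (pselect (Big (s x))) => bx.
    case: (pselect (InfF (p x))) => fx.
      by have [-> _] := np1 bx fx; left; left; left; rewrite half_odd.
    by have [-> _] := np2 bx fx; left; left; right; rewrite half_odd; split => //; apply: L_kmin.
  case: (pselect TRow) => t; last by right.
  case: (pselect (infinite_set [set z | s z = s x])) => ix.
    by have [-> _] := np3 bx t ix; left; right; left; rewrite half_even.
  by left; right; right; apply: contra_notP ix.
apply: (idU hI); last exact: W4_I.
apply: (idU hI); last by apply: (idU hI); [exact: W2_I|exact: L_finsec].
by apply: (idU hI); [exact: F1|exact: W1_I].
Qed.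

Lemma nF2 : SF2 I npiece nrow.
Proof.
move=> R A AR fA.
apply: (idS hI (A := (A `&` [set x | Big (s x) /\ s x = R./2]) `|`
   (A `&` [set x | ~ Big (s x) /\ TRow]) `|` [set x | ~ TRow /\ ~ Big (s x)])).
  move=> x Ax; case: (pselect (Big (s x))) => bx.
    left; left; split => //; split => //; have := AR x Ax => /= <-.
    case: (pselect (InfF (p x))) => fx.
      by have [_ ->] := np1 bx fx; rewrite half_odd.
    by have [_ ->] := np2 bx fx; rewrite half_odd.
  by case: (pselect TRow) => t; [left; right|right].
apply: (idU3 hI); last exact: W4_I.
- apply: (F2 (i := R./2)); first by move=> x [_ []].
  move=> k; case: (pselect (InfF k)) => fk.
    apply: (sub_finite_set (B := A `&` [set x | npiece x = k.*2.+1])); last exact: fA.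
    move=> x [[Ax [bx sx]] px]; split => //=.
    have fx : InfF (p x) by rewrite px.
    by have [-> _] := np1 bx fx; rewrite px.
  apply: (sub_finite_set (B := [set x | p x = k])); first by move=> x [].
  exact: contra_notP fk.
- apply: F3 => i; case: (pselect (Big i)) => bi.
    by apply: fin_empty => x [[_ [bx _]] sx]; apply: bx; rewrite sx.
  case: (pselect (infinite_set [set z | s z = i])) => ii; last first.
    by apply: (sub_finite_set (B := [set z | s z = i])); [move=> x []|exact: contra_notP ii].
  apply: (sub_finite_set (B := A `&` [set x | npiece x = i.*2])); last exact: fA.
  move=> x [[Ax [bx t]] sx]; split => //=.
  by rewrite -sx in ii; have [-> _] := np3 bx t ii; rewrite sx.
Qed.

Lemma nF3 : SF3 I nrow.
Proof.
move=> A fA.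
apply: (idS hI (A := (A `&` [set x | Big (s x)]) `|`
   (A `&` [set x | ~ Big (s x) /\ TRow]) `|` [set x | ~ TRow /\ ~ Big (s x)])).
  move=> x Ax; case: (pselect (Big (s x))) => bx; first by left; left.
  by case: (pselect TRow) => t; [left; right|right].
apply: (idU3 hI); last exact: W4_I.
- apply: F3 => i; case: (pselect (Big i)) => bi; last first.
    by apply: fin_empty => x [[_ bx] sx]; apply: bi; rewrite -sx.
  apply: (sub_finite_set (B := A `&` [set x | nrow x = i.*2.+1])); last exact: fA.
  move=> x [[Ax bx] sx]; split => //=.
  case: (pselect (InfF (p x))) => fx.
    by have [_ ->] := np1 bx fx; rewrite sx.
  by have [_ ->] := np2 bx fx; rewrite sx.
- apply: (idF hI); apply: (sub_finite_set (B := A `&` [set x | nrow x = 0%N])); last exact: fA.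
  move=> x [Ax [bx t]]; split => //=; case: (pselect (infinite_set [set z | s z = s x])) => ix.
    by have [_ ->] := np3 bx t ix.
  have fx : finite_set [set z | s z = s x] by apply: contra_notP ix.
  by have [_ ->] := np4 bx t fx.
Qed.

Lemma nStruct : Struct I npiece nrow.
Proof. exact: (F_Struct hI nnest nF1 nF2 nF3). Qed.

Lemma nND1 x : infinite_set [set y | npiece y = npiece x].
Proof.
case: (npiece_cases x) => [[k [ex [ik hx]]]|[i [ex [[_ ii] [_ hx]]]]].
  by apply: (sub_infinite_set (A := [set y | p y = k])) => // y py; rewrite ex; case: (hx y py).
by apply: (sub_infinite_set (A := [set y | s y = i])) => // y sy; rewrite ex; case: (hx y sy).
Qed.

Lemma nND2 x : infinite_set [set L | exists y, npiece y = L /\ nrow y = nrow x].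
Proof.
have oddinj : {in Nk (s x) &, injective (fun k => k.*2.+1)}.
  by move=> a b _ _ /eq_add_S /double_inj.
have odd_case : forall i, Big i -> nrow x = i.*2.+1 ->
    infinite_set [set L | exists y, npiece y = L /\ nrow y = nrow x].
  move=> i bi rx.
  apply: (sub_infinite_set (A := (fun k => k.*2.+1) @` Nk i)).
    move=> L [k nk <-]; have [ik [y [py sy]]] := nk.
    have by' : Big (s y) by rewrite sy.
    have fy : InfF (p y) by rewrite py.
    by exists y; have [-> ->] := np1 by' fy; rewrite py sy rx.
  by apply: infinite_inj_img => // a b _ _ /eq_add_S /double_inj.
case: (pselect (Big (s x))) => bx.
  apply: (odd_case (s x)) => //; case: (pselect (InfF (p x))) => fx.
    by have [_ ->] := np1 bx fx.
  by have [_ ->] := np2 bx fx.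
case: (pselect TRow) => t; last by apply: (odd_case ib); [exact: L_ib|have [_ ->] := np5 bx t].
have rx : nrow x = 0%N.
  case: (pselect (infinite_set [set z | s z = s x])) => ix.
    by have [_ ->] := np3 bx t ix.
  have fx : finite_set [set z | s z = s x] by apply: contra_notP ix.
  by have [_ ->] := np4 bx t fx.
apply: (sub_infinite_set (A := double @` SmallInf)).
  move=> L [i [bi ii] <-]; have [y sy] := infinite_setN0 ii.
  have by' : ~ Big (s y) by rewrite sy.
  have iy : infinite_set [set z | s z = s y] by rewrite sy.
  by exists y; have [-> ->] := np3 by' t iy; rewrite sy rx.
by apply: infinite_inj_img => // a b _ _ /double_inj.
Qed.

End Normalize.

Lemma pairs_enum : exists (fp : nat * nat -> nat) (gp : nat -> nat * nat),
  (forall z, gp (fp z) = z) /\ (forall n, fp (gp n) = n).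
Proof.
have [fp [gp [h1 h2]]] := enum_inf (countableP [set: nat * nat]) infinite_prod_nat.
by exists fp, gp; split => [z|n]; [apply: h1|case: (h2 n)].
Qed.

Section Final.
Variables (X : Type) (I : set (set X)) (hI : is_ideal I) (p s : X -> nat).
Hypothesis hS : Struct I p s.
Hypothesis ND1 : forall x, infinite_set [set y | p y = p x].
Hypothesis ND2 : forall x, infinite_set [set L | exists y, p y = L /\ s y = s x].
Let nest := hS.1.
Let F1 : SF1 I p := let: And3 a _ _ := Struct_F hS in a.
Let F2 : SF2 I p s := let: And3 _ a _ := Struct_F hS in a.
Let F3 : SF3 I s := let: And3 _ _ a := Struct_F hS in a.

Lemma regroup : finite_set [set i | exists x, s x = i] ->
  exists s' : X -> nat, [/\ Struct I p s',
    (forall x, infinite_set [set L | exists y, p y = L /\ s' y = s' x]) &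
    infinite_set [set i | exists x, s' x = i]].
Proof.
move=> fR.
have fin2 : forall A, (forall L, finite_set (A `&` [set x | p x = L])) -> I A.
  move=> A fA; apply: (idS hI (A := \bigcup_(i in [set i | exists x, s x = i])
     (A `&` [set x | s x = i]))).
    by move=> x Ax; exists (s x); [exists x|].
  apply: (id_bigcup_fin hI) => // i _; apply: (F2 (i := i)); first by move=> x [].
  by move=> L; apply: (sub_finite_set (B := A `&` [set x | p x = L])); [move=> x [[]]|].
have [fp [gp [hp1 hp2]]] := pairs_enum.
have cPL : countable [set L | exists x, p x = L] by [].
have [x0 _] := positive_nonempty hI (idT hI).
have iPL : infinite_set [set L | exists x, p x = L].
  apply: (sub_infinite_set (A := [set L | exists y, p y = L /\ s y = s x0])).
    by move=> L [y [py _]]; exists y.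
  exact: ND2.
have [fb [gb [hb1 hb2]]] := enum_inf cPL iPL.
pose s' x := (gp (fb (p x))).1.
have ns' : forall x y, p x = p y -> s' x = s' y by move=> x y pxy; rewrite /s' pxy.
have rowj : forall j m, exists y, p y = gb (fp (j, m)) /\ s' y = j.
  move=> j m; have [[y py] _] := hb2 (fp (j, m)); exists y; split => //.
  by rewrite /s' py (hb2 _).2 hp1.
exists s'; split.
- apply: (F_Struct hI ns' F1).
    by move=> j A _ fA; apply: fin2.
  move=> A fA; apply: fin2 => L.
  case: (pselect (exists y, p y = L)) => [[y py]|ny]; last first.
    by apply: fin_empty => x [_ px]; apply: ny; exists x.
  apply: (sub_finite_set (B := A `&` [set x | s' x = s' y])); last exact: fA.
  by move=> x [Ax px]; split => //; apply: ns'; rewrite px py.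
- move=> x; apply: (sub_infinite_set (A := (fun m => gb (fp (s' x, m))) @` setT)).
    move=> L [m _ <-]; exact: rowj.
  apply: infinite_inj_img; first exact: infinite_nat.
  move=> a b _ _ e; have := congr1 fb e; rewrite !(hb2 _).2 => /(congr1 gp).
  by rewrite !hp1 => -[].
- apply: (sub_infinite_set (A := setT)); last exact: infinite_nat.
  by move=> j _; have [y [_ sy]] := rowj j 0%N; exists y.
Qed.


Hypothesis hc : countable [set: X].
Hypothesis iR : infinite_set [set i | exists x, s x = i].

Lemma final_below : ideal_below BI I.
Proof.
have [x0 _] := positive_nonempty hI (idT hI).
pose RS := [set i | exists x, s x = i].
pose PL r := [set L | exists y, p y = L /\ s y = r].
have [fr [gr [hr1 hr2]]] := enum_inf (countableP RS) iR.
have hk : forall r, exists fg : (nat -> nat) * (nat -> nat), RS r ->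
    (forall L, PL r L -> fg.2 (fg.1 L) = L) /\
    (forall n, PL r (fg.2 n) /\ fg.1 (fg.2 n) = n).
  move=> r; case: (pselect (RS r)) => [[x sx]|nr]; last by exists (id, id).
  have [f [g [h1 h2]]] := enum_inf (countableP (PL r)) (ltac:(rewrite -sx; exact: ND2 x)).
  by exists (f, g).
have [ka hka] := choice hk.
have hf : forall L, exists fg : (X -> nat) * (nat -> X), (exists x, p x = L) ->
    (forall x, p x = L -> fg.2 (fg.1 x) = x) /\
    (forall n, p (fg.2 n) = L /\ fg.1 (fg.2 n) = n).
  move=> L; case: (pselect (exists x, p x = L)) => [[x px]|nl]; last first.
    by exists ((fun _ => 0%N), (fun _ => x0)).
  have cF : countable [set y | p y = L] by apply: (sub_countable _ hc); apply: subset_card_le.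
  have [f [g [h1 h2]]] := enum_inf cF (ltac:(rewrite -px; exact: ND1 x)).
  by exists (f, g).
have [ph hph] := choice hf.
pose f x := (fr (s x), ((ka (s x)).1 (p x), (ph (p x)).1 x)).
pose g (z : nat * (nat * nat)) :=
  let r := gr z.1 in let L := (ka r).2 z.2.1 in (ph L).2 z.2.2.
have RSx : forall x, RS (s x) by move=> x; exists x.
have PLx : forall x, PL (s x) (p x) by move=> x; exists x.
have gf : cancel f g.
  move=> x; rewrite /g /f /=.
  rewrite (hr1 _ (RSx x)) ((hka (s x) (RSx x)).1 _ (PLx x)).
  by apply: (hph (p x) (ex_intro _ x erefl)).1.
have fg : cancel g f.
  move=> [i [j l]]; rewrite /g /f /=.
  have [ri fri] := hr2 i.
  have [PLL kaL] := (hka (gr i) ri).2 j.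
  set L := (ka (gr i)).2 j in PLL kaL *.
  have eL : exists x, p x = L by case: PLL => y [py _]; exists y.
  have [py fy] := (hph L eL).2 l.
  have sy : s ((ph L).2 l) = gr i.
    by case: PLL => y [py' sy']; rewrite -sy'; apply: nest; rewrite py py'.
  by rewrite sy py fri kaL fy.
exists f; split; first by exists g.
move=> A [k0 [hA1 hA2]].
have finsec : forall i, (k0 <= i)%N -> forall j, finite_set [set l | A (i, (j, l))].
  move=> i ki j; apply: (sub_finite_set (B := snd @` [set jl | A (i, jl)])).
    by move=> l Al; exists (j, l).
  by apply: finite_image; apply: hA2.
have fxi : forall x, f x = (fr (s x), ((ka (s x)).1 (p x), (ph (p x)).1 x)) by [].
apply: hS.2; split.
- pose K := \bigcup_(i in `I_k0) ((fun j => (i, j)) @` [set j | infinite_set [set l | A (i, (j, l))]]).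
  have fK : finite_set K.
    apply: bigcup_finite; first exact: finite_II.
    by move=> i ik; apply: finite_image; apply: hA1.
  apply: (fin_image_sub (h := fun z : nat * nat => (ka (gr z.1)).2 z.2) fK).
  move=> L /= inf.
  have [y [Ay py]] := infinite_setN0 inf.
  have ri : RS (s y) := RSx y.
  exists (fr (s y), (ka (s y)).1 L); last first.
    by rewrite /= hr1 // (hka _ ri).1 // -py.
  have il : infinite_set [set l | A (fr (s y), ((ka (s y)).1 L, l))].
    apply: (sub_infinite_set (A := (ph L).1 @` (f @^-1` A `&` [set x | p x = L]))).
      move=> l [x [Ax px] <-]; rewrite /= -px.
      have sx : s x = s y by apply: nest; rewrite px py.
      by move: Ax; rewrite /preimage /= fxi sx.
    apply: infinite_inj_img => // a b; rewrite !inE => -[_ pa] [_ pb] e.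
    have eL : exists x, p x = L by exists y.
    by rewrite -((hph L eL).1 a pa) -((hph L eL).1 b pb) e.
  exists (fr (s y)) => //.
    apply: contra_notP il => /negP; rewrite -leqNgt => ki.
    exact: finsec.
  by exists ((ka (s y)).1 L).
- apply: (fin_image_sub (h := gr) (finite_II k0)).
  move=> r /= inf; have [y [Ay sy]] := infinite_setN0 inf.
  have ri : RS r by exists y.
  exists (fr r); last exact: hr1.
  apply: contra_notP inf => /negP; rewrite -leqNgt => ki.
  apply: (sub_finite_set (B := (fun x => (f x).2) @^-1` [set jl | A (fr r, jl)] `&` [set x | s x = r])).
    by move=> x [Ax sx]; split => //; move: Ax; rewrite /preimage /= fxi sx.
  set S := (X in finite_set X).
  case: (pselect (finite_set S)) => // iS; exfalso.
  have : infinite_set ((fun x => (f x).2) @` S).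
    apply: infinite_inj_img => // a b; rewrite !inE => -[_ sa] [_ sb] e.
    apply: (can_inj gf); rewrite !fxi sa sb.
    by move: e; rewrite !fxi /= sa sb => ->.
  apply; apply: sub_finite_set (hA2 _ ki).
  by move=> z [x [Sx _] <-].
Qed.

End Final.

Lemma struct_boring (X : Type) (I : set (set X)) (p s : X -> nat) :
  is_ideal I -> countable [set: X] -> Struct I p s -> ideal_below BI I.
Proof.
move=> hI hc hS.
have S1 := nStruct hI hS.
have N1 := nND1 hI hS.
have N2 := nND2 hI hS.
set P := npiece _ _ in S1 N1 N2; set R := nrow _ _ in S1 N1 N2.
case: (pselect (finite_set [set i | exists x, R x = i])) => fR.
  have [s' [S2 N2' iR]] := regroup hI S1 N2 fR.
  exact: (final_below hI S2 N1 N2' hc iR).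
exact: (final_below hI S1 N1 N2 hc fR).
Qed.

Definition seed (j : nat) : set nat := [set m | exists i : nat, m = pickle (j, i)].

Lemma pickle_inj2 : injective (pickle : nat * nat -> nat).
Proof. exact: pcan_inj pickleK. Qed.

Lemma seed_inf j : infinite_set (seed j).
Proof.
apply: (sub_infinite_set (A := (fun i => pickle (j, i)) @` setT)).
  by move=> m [i _ <-]; exists i.
apply: infinite_inj_img; first exact: infinite_nat.
by move=> a b _ _ /pickle_inj2 [].
Qed.

Lemma seed_disj j j' m : seed j m -> seed j' m -> j = j'.
Proof. by move=> [i ->] [i' /pickle_inj2 [->]]. Qed.

Lemma least_ex (P : nat -> Prop) : (exists k, P k) ->
  exists k, P k /\ forall k', P k' -> (k <= k')%N.
Proof.
move=> ex; have ex' : exists k, (fun k => `[< P k >]) k by case: ex => k Pk; exists k; apply/asboolP.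
case: (ex_minnP ex') => k /asboolP Pk hk; exists k; split => // k' Pk'.
by apply: hk; apply/asboolP.
Qed.

Definition fto (X : Type) (g : X -> nat) (B : set X) :=
  forall m, finite_set (B `&` [set n | g n = m]).

Definition StageOut (X : Type) (I : set (set X)) (D : set X) (g : X -> nat)
    (C : nat -> set nat) (a : set nat) :=
  [/\ infinite_set a, (forall k, finite_set (a `&` C k)) &
   (exists B, [/\ B `<=` D, ~ I B &
      (exists m, forall n, B n -> g n = m) \/
      (fto g B /\ exists c, (c = a \/ exists k, c = C k) /\ forall n, B n -> c (g n))])
   \/
   (exists sigma : nat -> nat, forall A, A `<=` D ->
      finite_set [set m | infinite_set (A `&` [set n | g n = m])] ->
      finite_set [set i | infinite_set (A `&` [set n | sigma (g n) = i])] -> I A)].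

Section Stage.
Variables (X : Type) (I : set (set X)) (hI : is_ideal I) (D : set X) (g : X -> nat)
  (C : nat -> set nat).
Hypothesis hC0 : forall j, C j.*2 = seed j.
Hypothesis hC1 : forall n k, finite_set (seed n `&` C k.*2.+1).

Lemma diag_ex : exists d : set nat, infinite_set d /\ forall k, finite_set (d `&` C k).
Proof.
have hc : forall n, exists c, seed n c /\ forall k, (k <= n)%N -> ~ C k.*2.+1 c.
  move=> n; apply: contrapT => /forallNP h.
  suff fs : finite_set (seed n) by exact: seed_inf n fs.
  apply: (sub_finite_set (B := \bigcup_(k in `I_n.+1) (seed n `&` C k.*2.+1))).
    move=> c sc; have := h c => /not_andP [//|] /existsNP [k /not_implyP [kn /contrapT Ck]].
    by exists k => //; split.
  by apply: bigcup_finite; [exact: finite_II|move=> k _; apply: hC1].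
have [c hc'] := choice hc.
exists (range c); split.
  apply: infinite_inj_img; first exact: infinite_nat.
  move=> a b _ _ e; have [sa _] := hc' a; have [sb _] := hc' b.
  by apply: (seed_disj sa); rewrite e.
move=> k; have := odd_double_half k; case: (odd k) => /= <-.
  apply: (sub_finite_set (B := c @` `I_(k./2).+1)); last by apply: finite_image; exact: finite_II.
  move=> m [[n _ <-] Cn]; exists n => //=.
  case: (leqP k./2 n) => h; last by rewrite ltnS ltnW.
  by exfalso; move: Cn; rewrite add1n; exact: ((hc' n).2 _ h).
rewrite add0n hC0.
apply: (sub_finite_set (B := [set c (k./2)])); last exact: finite_set1.
move=> m [[n _ <-] sn] /=; have [sn' _] := hc' n.
by rewrite (seed_disj sn' sn).
Qed.

Definition sig_ok (sigma : nat -> nat) :=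
  [/\ (forall k m, C k m -> exists l, (l <= k)%N /\ sigma m = l.*2),
      (forall m l, sigma m = l.*2 -> C l m) &
      (forall m m', sigma m = m'.*2.+1 -> m' = m)].

Lemma sig_ex : exists sigma, sig_ok sigma.
Proof.
have hs : forall m, exists v, ((exists k, C k m) -> exists l, C l m /\ v = l.*2 /\
     forall k, C k m -> (l <= k)%N) /\ (~ (exists k, C k m) -> v = m.*2.+1).
  move=> m; case: (pselect (exists k, C k m)) => ex.
    have [l [Cl hl]] := least_ex ex; exists l.*2; split => // _.
    by exists l.
  by exists m.*2.+1.
have [sigma hsig] := choice hs; exists sigma; split.
- move=> k m Ckm; have [/(_ (ex_intro _ k Ckm)) [l [Cl [e hl]]] _] := hsig m.
  by exists l; split => //; apply: hl.
- move=> m l e; case: (pselect (exists k, C k m)) => ex.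
    have [/(_ ex) [l' [Cl [e' _]]] _] := hsig m.
    by move: e; rewrite e' => /double_inj <-.
  have [_ /(_ ex) e'] := hsig m; exfalso; move: e; rewrite e'.
  by move=> /(congr1 odd); rewrite /= !odd_double.
- move=> m m' e; case: (pselect (exists k, C k m)) => ex.
    have [/(_ ex) [l' [Cl [e' _]]] _] := hsig m; exfalso; move: e; rewrite e'.
    by move=> /(congr1 odd); rewrite /= !odd_double.
  by have [_ /(_ ex) e'] := hsig m; move: e; rewrite e' => -[/double_inj].
Qed.


Lemma stage_ex : exists a, StageOut I D g C a.
Proof.
have [sigma [sP1 sP2 sP3]] := sig_ex.
pose Sec i := [set n | sigma (g n) = i].
pose SecF (B : set X) := forall i, finite_set (B `&` Sec i).
have fto_of : forall B, SecF B -> fto g B.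
  move=> B sB m; apply: (sub_finite_set (B := B `&` Sec (sigma m))); last exact: sB.
  by move=> n [Bn gn]; split => //; rewrite /Sec /= gn.
have Cfin : forall B k, SecF B -> finite_set (B `&` [set n | C k (g n)]).
  move=> B k sB.
  apply: (sub_finite_set (B := \bigcup_(l in `I_k.+1) (B `&` Sec l.*2))).
    move=> n [Bn Cn]; have [l [lk e]] := sP1 _ _ Cn.
    by exists l => //; split.
  by apply: bigcup_finite; [exact: finite_II|move=> l _; apply: sB].
pose Q := exists B, [/\ B `<=` D, ~ I B & SecF B].
case: (pselect Q) => [hQ|nQ].
  have [B [BD nB sB]] := hQ.
  exists (g @` B); split.
  - by apply: infinite_image_fto; [exact: (positive_infinite hI nB)|exact: fto_of].
  - move=> k; apply: (sub_finite_set (B := g @` (B `&` [set n | C k (g n)]))).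
      by move=> m [[n Bn <-] Cm]; exists n.
    by apply: finite_image; apply: Cfin.
  - left; exists B; split => //; right; split; first exact: fto_of.
    by exists (g @` B); split; [left|move=> n Bn; exists n].
have [d [id fd]] := diag_ex.
exists d; split => //.
pose ConvC := exists B, [/\ B `<=` D, ~ I B &
      (exists m, forall n, B n -> g n = m) \/
      (fto g B /\ exists c, (c = d \/ exists k, c = C k) /\ forall n, B n -> c (g n))].
case: (pselect ConvC) => [h|nC]; first by left.
right; exists sigma => A AD fKF fKS.
have fib : forall m, I (D `&` [set n | g n = m]).
  move=> m; apply: contrapT => nI; apply: nC; exists (D `&` [set n | g n = m]); split => //.
  by left; exists m => n [].
set KF := [set m | _] in fKF; set KS := [set i | _] in fKS.
pose A1 := \bigcup_(m in KF) (D `&` [set n | g n = m]).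
pose A' := A `\` A1.
have ftoA' : fto g A'.
  move=> m; case: (pselect (KF m)) => km.
    by apply: fin_empty => n [[An nA1] gn]; apply: nA1; exists m => //; split => //; apply: AD.
  by apply: contra_notP km; apply: contra_not; apply: sub_finite_set => n [[An _] gn].
pose A2 := \bigcup_(i in KS) (A' `&` Sec i).
pose A3 := A' `\` A2.
apply: (idS hI (A := A1 `|` A2 `|` A3)).
  move=> n An; case: (pselect (A1 n)) => h1; first by left; left.
  case: (pselect (A2 n)) => h2; first by left; right.
  by right; split.
apply: (idU3 hI).
- by apply: (id_bigcup_fin hI) => // m _; apply: fib.
- apply: (id_bigcup_fin hI) => // i _.
  have := odd_double_half i; case: (odd i) => /= <-; last first.
    rewrite add0n; apply: contrapT => nI; apply: nC.
    exists (A' `&` Sec (i./2).*2); split => //.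
      by move=> n [[An _] _]; apply: AD.
    right; split.
      by move=> m; apply: (sub_finite_set (B := A' `&` [set n | g n = m])); [move=> n [[]]|].
    exists (C i./2); split; first by right; exists i./2.
    by move=> n [_ e]; apply: sP2.
  rewrite add1n; apply: (idS hI (A := D `&` [set n | g n = i./2])); last exact: fib.
  move=> n [[An _] e]; split; first exact: AD.
  by move: e; rewrite /Sec /= => /sP3 ->.
- apply: contrapT => nI; apply: nQ; exists A3; split => //.
    by move=> n [[An _] _]; apply: AD.
  move=> i; case: (pselect (KS i)) => ki.
    by apply: fin_empty => n [[A'n nA2] si]; apply: nA2; exists i.
  by apply: contra_notP ki; apply: contra_not; apply: sub_finite_set => n [[[An _] _] si].
Qed.

End Stage.

Lemma stage_fun (X : Type) (I : set (set X)) : is_ideal I ->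
  exists st : (nat -> set nat) -> set X -> (X -> nat) -> set nat,
   forall C D g, (forall j, C j.*2 = seed j) ->
     (forall n k, finite_set (seed n `&` C k.*2.+1)) -> StageOut I D g C (st C D g).
Proof.
move=> hI.
have h : forall z : (nat -> set nat) * set X * (X -> nat), exists a,
   (forall j, z.1.1 j.*2 = seed j) ->
   (forall n k, finite_set (seed n `&` z.1.1 k.*2.+1)) -> StageOut I z.1.2 z.2 z.1.1 a.
  move=> [[C D] g] /=.
  case: (pselect ((forall j, C j.*2 = seed j) /\ (forall n k, finite_set (seed n `&` C k.*2.+1)))).
    by move=> [h0 h1]; have [a ha] := stage_ex hI D g h0 h1; exists a.
  by move=> nh; exists set0 => h0 h1; exfalso; apply: nh.
have [st hst] := choice h.
by exists (fun C D g => st (C, D, g)) => C D g; apply: (hst (C, D, g)).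
Qed.

Lemma cantor_unc : ~ countable [set: set nat].
Proof.
move=> /countable_injP [f finj].
pose Dg := [set n | exists S, f S = n /\ ~ S n].
case: (pselect (Dg (f Dg))) => h.
  have [S [e nS]] := h; have eS : S = Dg := finj S Dg (in_setT _) (in_setT _) e.
  by apply: nS; rewrite eS; exact: h.
by apply: (h); rewrite /Dg /=; exists Dg; split => //; exact: h.
Qed.

Lemma CH_order : CH -> exists (Wt : Type) (ltW : Wt -> Wt -> Prop),
  [/\ well_founded ltW, (forall v w, v <> w -> ltW v w \/ ltW w v),
      (forall w, countable [set v | ltW v w]), ~ countable [set: Wt] &
      exists phi : Wt -> set nat, forall S, exists w, phi w = S].
Proof.
move=> hCH.
have [R wR] := well_ordering_principle (set nat).
have minP : forall P : set (set nat), (exists x, P x) ->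
    exists z, P z /\ forall x, P x -> R z x.
  move=> P [x Px].
  have ne : nonempty (mem P) by exists x; rewrite inE.
  have [z [[zP lb] _]] := wR _ ne.
  by exists z; split; [rewrite inE in zP|move=> y Py; apply: lb; rewrite inE].
have Rrefl : forall x, R x x.
  by move=> x; have [z [zx h]] := minP (fun y => y = x) (ex_intro _ x erefl); rewrite -zx; apply: h.
have Rtot : forall x y, R x y \/ R y x.
  move=> x y; have [z [zxy h]] := minP (fun u => u = x \/ u = y) (ex_intro _ x (or_introl erefl)).
  by case: zxy => <-; [left|right]; apply: h; [right|left].
have Ranti : forall x y, R x y -> R y x -> x = y.
  move=> x y rxy ryx.
  have ne : nonempty (mem [set u | u = x \/ u = y]) by exists x; rewrite inE; left.
  have [z [_ uq]] := wR _ ne.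
  have e1 : z = x.
    apply: uq; split; first by rewrite inE; left.
    by move=> u; rewrite inE => -[->|->].
  have e2 : z = y.
    apply: uq; split; first by rewrite inE; right.
    by move=> u; rewrite inE => -[->|->].
  by rewrite -e1 -e2.
pose lt x y := R x y /\ x <> y.
have wf : well_founded lt.
  move=> x; apply: contrapT => nA.
  have [m [nm hm]] := minP (fun y => ~ Acc lt y) (ex_intro _ x nA).
  apply: nm; constructor => y [ryx nyx]; apply: contrapT => ny.
  by apply: nyx; apply: Ranti => //; apply: hm.
pose W := [set S | countable [set U | lt U S]].
have Wunc : ~ countable W.
  case: (pselect (exists S, ~ W S)) => [ex|nex].
    have [S0 [nW0 h0]] := minP _ ex.
    move=> cW; apply: nW0; apply: sub_countable cW; apply: subset_card_le.
    move=> U [rU nU]; apply: contrapT => nWU.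
    by apply: nU; apply: Ranti => //; apply: h0.
  move=> cW; apply: cantor_unc; apply: sub_countable cW; apply: subset_card_le.
  by move=> S _; apply: contrapT => nS; apply: nex; exists S.
have [//|eW] := hCH W.
have [phi0 [_ _ phis]] := card_set_bijP eW.
pose Wt := {S : set nat | W S}.
exists Wt, (fun v w => lt (proj1_sig v) (proj1_sig w)); split.
- move=> w; case: w => S hS; move: hS; elim: (wf S) => S' _ IH hS'.
  by constructor => -[v hv] /= lv; apply: IH.
- move=> [v hv] [w hw] /= nvw.
  have nvw' : v <> w by move=> e; subst; apply: nvw; congr exist.
  by case: (Rtot v w) => r; [left|right]; split => // e; apply: nvw'.
- move=> [w hw]; have cw := hw.
  apply/countable_injP.
  have [f finj] := countable_injP _ cw.
  exists (fun v : Wt => f (proj1_sig v)) => v v' hv hv' e.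
  case: v v' hv hv' e => [v pv] [v' pv'] /=; rewrite !inE /= => hv hv' e.
  have := finj v v'; rewrite !inE => /(_ hv hv' e) ev; subst; congr exist; exact: Prop_irrelevance.
- move=> cWt; apply: Wunc; apply/countable_injP.
  have [f finj] := countable_injP _ cWt.
  exists (fun S => match pselect (W S) with left p => f (exist _ S p) | right _ => 0%N end).
  move=> S S'; rewrite !inE => hS hS'.
  case: pselect => // p; case: pselect => // p' e.
  by have := finj _ _ (in_setT _) (in_setT _) e => -[].
- exists (fun w => phi0 (proj1_sig w)) => S.
  have [U WU e] := phis S I.
  by exists (exist _ U WU).
Qed.

Lemma enum_fam : exists E : set (set nat) -> nat -> set nat, forall F,
  countable F -> F set0 -> (forall n, F (E F n)) /\ (forall c, F c -> exists n, E F n = c).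
Proof.
have h : forall F : set (set nat), exists e : nat -> set nat,
    countable F -> F set0 -> (forall n, F (e n)) /\ (forall c, F c -> exists n, e n = c).
  move=> F; case: (pselect (countable F)) => cF; last by exists (fun _ => set0).
  have [f finj] := countable_injP _ cF.
  exists (fun n => xget set0 [set c | F c /\ f c = n]) => _ F0; split.
    move=> n; case: (pselect (exists c, F c /\ f c = n)) => ex.
      by case: (xgetPex set0 ex).
    by rewrite xgetPN // => c hc; apply: ex; exists c.
  move=> c Fc; exists (f c).
  have [Fc' e] : [set c' | F c' /\ f c' = f c] (xget set0 [set c' | F c' /\ f c' = f c]).
    by apply: xgetPex; exists c.
  by apply: finj; rewrite ?inE.
have [E hE] := choice h; exists E => F; exact: hE.
Qed.

Section Rec.
Variables (Wt : Type) (ltW : Wt -> Wt -> Prop) (wf : well_founded ltW).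
Hypothesis cpred : forall w, countable [set v | ltW v w].
Variable st : (nat -> set nat) -> Wt -> set nat.
Hypothesis hst : forall C w, (forall j, C j.*2 = seed j) ->
  (forall n k, finite_set (seed n `&` C k.*2.+1)) -> forall k, finite_set (st C w `&` C k).
Variable E : set (set nat) -> nat -> set nat.
Hypothesis hE : forall F, countable F -> F set0 ->
  (forall n, F (E F n)) /\ (forall c, F c -> exists n, E F n = c).

Definition Fam w (rec : forall v, ltW v w -> set nat) : set (set nat) :=
  [set c | c = set0 \/ exists v (h : ltW v w), c = rec v h].
Definition Cof w (rec : forall v, ltW v w -> set nat) (k : nat) : set nat :=
  if odd k then E (Fam rec) k./2 else seed k./2.
Definition Fstep w (rec : forall v, ltW v w -> set nat) : set nat := st (Cof rec) w.

Definition aW : Wt -> set nat := Fix wf (fun _ => set nat) Fstep.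
Definition Cw (w : Wt) : nat -> set nat := Cof (fun v (_ : ltW v w) => aW v).

Lemma aW_eq w : aW w = st (Cw w) w.
Proof.
rewrite /aW Fix_eq //.
move=> x f g hfg; have -> : f = g; last by [].
by apply: functional_extensionality_dep => v; apply: functional_extensionality_dep => h; apply: hfg.
Qed.

Lemma Cw_even w j : Cw w j.*2 = seed j.
Proof. by rewrite /Cw /Cof odd_double doubleK. Qed.

Lemma Fam_count w : countable (Fam (fun v (_ : ltW v w) => aW v)).
Proof.
apply: (sub_countable (B := \bigcup_(b in [set: bool]) (if b then [set set0] else aW @` [set v | ltW v w]))).
  apply: subset_card_le => c [->|[v [h ->]]]; first by exists true.
  by exists false => //=; exists v.
apply: bigcup_countable => // -[] _ /=; first exact: finite_set_countable (finite_set1 _).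
by apply: (sub_countable (card_image_le _ _)).
Qed.

Lemma Cw_odd w k : Cw w k.*2.+1 = set0 \/ exists v, ltW v w /\ Cw w k.*2.+1 = aW v.
Proof.
have := (hE (Fam_count w) (or_introl erefl)).1 k.
rewrite /Cw /Cof /= odd_double /= uphalf_double.
by case=> [->|[v [h ->]]]; [left|right; exists v].
Qed.

Lemma Cw_pred w v : ltW v w -> exists k, Cw w k.*2.+1 = aW v.
Proof.
move=> h; have [k ek] := (hE (Fam_count w) (or_introl erefl)).2 (aW v) (or_intror (ex_intro _ v (ex_intro _ h erefl))).
by exists k; rewrite /Cw /Cof /= odd_double /= uphalf_double.
Qed.

Lemma seeds_fin w n : finite_set (seed n `&` aW w).
Proof.
elim: (wf w) n => {}w _ IH n.
have h1 : forall n k, finite_set (seed n `&` Cw w k.*2.+1).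
  move=> n' k; case: (Cw_odd w k) => [->|[v [lv ->]]]; last exact: IH.
  by rewrite setI0; exact: finite_set0.
rewrite aW_eq setIC -(Cw_even w n).
by apply: hst => //; exact: Cw_even.
Qed.

Lemma Cw_hC1 w n k : finite_set (seed n `&` Cw w k.*2.+1).
Proof.
case: (Cw_odd w k) => [->|[v [lv ->]]]; last exact: seeds_fin.
by rewrite setI0; exact: finite_set0.
Qed.

End Rec.

Lemma oddev a b : a.*2.+1 = b.*2 -> False.
Proof. by move=> /(congr1 odd); rewrite /= !odd_double. Qed.

Lemma dec_ex (X : Type) : countable [set: X] ->
  exists dec : set nat -> set X * (X -> nat), forall D g, exists S, dec S = (D, g).
Proof.
move=> /countable_injP [e einj].
have einj' : injective e by move=> a b h; apply: einj; rewrite ?inE.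
exists (fun S => ([set x | S (e x).*2], fun x => xget 0%N [set m | S (pickle (e x, m)).*2.+1])).
move=> D g.
exists [set k | (exists x, k = (e x).*2 /\ D x) \/ (exists x, k = (pickle (e x, g x)).*2.+1)].
congr pair.
  apply: funext => x; apply: propext; split => /=.
    case=> [[x' [h Dx']]|[x' h]].
      by move: h => /double_inj /einj' ->.
    by exfalso; apply: (@oddev (pickle (e x', g x')) (e x)); rewrite h.
  by move=> Dx; left; exists x.
apply: funext => x; apply: xget_unique; first by right; exists x.
move=> y [[x' [h _]]|[x' h]].
  by exfalso; apply: (@oddev (pickle (e x, y)) (e x')); rewrite h.
by move: h => /eq_add_S /double_inj /pickle_inj2 [/einj' -> ->].
Qed.

Lemma finbw_core (X : Type) (I : set (set X)) (hI : is_ideal I) (hub : unboring I)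
  (hc : countable [set: X]) (Afam : set (set nat))
  (Hstage : forall (D : set X) (g : X -> nat), exists C a,
     [/\ Afam a, (forall k, Afam (C k) \/ C k = set0) & StageOut I D g C a])
  (x : X -> mrowka Afam) : exists B, ~ I B /\ converges_on x B.
Proof.
apply: contrapT => nex.
have NC : forall B, converges_on x B -> I B.
  by move=> B cB; apply: contrapT => nB; apply: nex; exists B.
pose D := [set n | exists m, x n = MN m].
pose g n := if x n is MN m then m else 0%N.
have gD : forall n, D n -> x n = MN (g n) by move=> n [m e]; rewrite /g e.
have [C [a [Aa AC [ainf afin out]]]] := Hstage D g.
case: out => [[B [BD nB disj]]|[sigma hsig]].
  apply: (nB); apply: NC; case: disj => [[m hm]|[fB [c [hc' cB]]]].
    by apply: (conv_const (v := MN m)) => n Bn; rewrite gD ?hm //; exact: BD.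
  have [n0 Bn0] := positive_nonempty hI nB.
  have Ac : Afam c.
    case: hc' => [->//|[k ek]]; rewrite ek in cB *; case: (AC k) => // e.
    by exfalso; have := cB n0 Bn0; rewrite e; apply.
  apply: (conv_MA (c := exist _ c Ac) (g := g)) => // n Bn.
  by split; [exact: gD (BD n Bn)|exact: cB].
apply: hub.
have [e einj] := countable_injP _ hc.
have einj' : injective e by move=> u v h; apply: einj; rewrite ?inE.
pose p n := xget 0%N [set k | exists n', e n' = k /\ x n' = x n].
have pE : forall n, exists n1, e n1 = p n /\ x n1 = x n.
  by move=> n; apply: (xgetPex 0%N (P := [set k | exists n', e n' = k /\ x n' = x n])); exists (e n), n.
have pP : forall n n', p n = p n' <-> x n = x n'.
  move=> n n'; split; last by move=> h; rewrite /p h.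
  move=> h; have [n1 [e1 x1]] := pE n; have [n2 [e2 x2]] := pE n'.
  by rewrite -x1 -x2; congr x; apply: einj'; rewrite e1 e2.
pose s n := match x n with MInf => 0%N | MA _ => 1%N | MN m => (sigma m).+2 end.
apply: (struct_boring (p := p) (s := s) hI hc); split.
  by move=> n n' /pP h; rewrite /s h.
move=> A [fKF fKS].
set KF := [set k | _] in fKF; set KS := [set i | _] in fKS.
pose XA := [set n | exists b, x n = MA b].
apply: (idS hI (A := [set n | x n = MInf] `|` (A `&` XA) `|` (A `&` D))).
  move=> n An; case E : (x n) => [m|b|].
  - by right; split => //; exists m.
  - by left; right; split => //; exists b.
  - by left; left.
apply: (idU3 hI).
- by apply: NC; apply: (conv_const (v := MInf)).
- have fib : forall k, I [set n | p n = k].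
    move=> k; case: (pselect (exists n0, p n0 = k)) => [[n0 pn0]|nk].
      by apply: NC; apply: (conv_const (v := x n0)) => n pn; apply/pP; rewrite pn.
    by apply: (idF hI); apply: fin_empty => n pn; apply: nk; exists n.
  pose R := [set n | A n /\ (exists b, x n = MA b) /\ ~ KF (p n)].
  apply: (idS hI (A := (\bigcup_(k in KF) [set n | p n = k]) `|` R)).
    move=> n [An xa]; case: (pselect (KF (p n))) => h; first by left; exists (p n).
    by right.
  apply: (idU hI); first by apply: (id_bigcup_fin hI) => // k _; apply: fib.
  apply: NC; apply: conv_inf; first by move=> n [_ [xa _]].
  move=> b; case: (pselect (exists n0, R n0 /\ x n0 = MA b)) => [[n0 [[An0 [_ nk]] xn0]]|nb];
    last by apply: fin_empty => n h; apply: nb; exists n.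
  apply: (sub_finite_set (B := A `&` [set n | p n = p n0])); last exact: contrapT nk.
  by move=> n [[An _] xn]; split => //; apply/pP; rewrite xn xn0.
- apply: (hsig (A `&` D)); first by move=> n [].
  + pose hm k := xget 0%N [set m | exists n, p n = k /\ x n = MN m].
    apply: (fin_image_sub (h := hm) fKF) => m /= inf.
    have [n0 [[An0 Dn0] gn0]] := infinite_setN0 inf.
    have xn0 : x n0 = MN m by rewrite gD // gn0.
    exists (p n0).
      apply: (sub_infinite_set (A := A `&` D `&` [set n | g n = m])) => //.
      by move=> n [[An Dn] gn]; split => //; apply/pP; rewrite xn0 gD // gn.
    rewrite /hm; apply: xget_unique; first by exists n0.
    move=> y [n [/pP pn xn]]; move: pn; rewrite xn xn0; by case.
  + apply: (fin_image_sub (h := fun j => j.-2) fKS) => i /= inf.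
    exists i.+2 => //.
    apply: (sub_infinite_set (A := A `&` D `&` [set n | sigma (g n) = i])) => //.
    move=> n [[An Dn] sn]; split => //; rewrite /= /s; move: (gD n Dn); case: (x n) => // m [->]; by rewrite sn.
Qed.

Unset Implicit Arguments.

Theorem theorem5p5 :
  CH ->
  forall (X : Type) (I : set (set X)),
    countable [set: X] -> infinite_set [set: X] ->
    is_ideal I -> unboring I ->
    exists A : set (set nat),
      [/\ almost_disjoint_family A,
          ~ countable [set: mrowka A] &
          FinBW I (mrowka A)].
Proof.
move=> hCH X I hc hinf hI hub.
have [Wt [ltW [wf tot cpred unc [phi phis]]]] := CH_order hCH.
have [dec decs] := dec_ex hc.
have [stf hstf] := stage_fun hI.
have [E hE] := enum_fam.
pose st C w := stf C (dec (phi w)).1 (dec (phi w)).2.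
have hst : forall C w, (forall j, C j.*2 = seed j) ->
    (forall n k, finite_set (seed n `&` C k.*2.+1)) -> forall k, finite_set (st C w `&` C k).
  by move=> C w h0 h1; case: (hstf C (dec (phi w)).1 (dec (phi w)).2 h0 h1).
pose a := aW wf st E.
pose Cw' := Cw wf st E.
have out : forall w, StageOut I (dec (phi w)).1 (dec (phi w)).2 (Cw' w) (a w).
  move=> w; rewrite /a (aW_eq wf st E w); apply: hstf.
    exact: Cw_even.
  exact: (Cw_hC1 wf cpred hst hE).
have ainf : forall w, infinite_set (a w) by move=> w; case: (out w).
have afin : forall w k, finite_set (a w `&` Cw' w k) by move=> w; case: (out w).
have aseed : forall w j, finite_set (a w `&` seed j).
  by move=> w j; rewrite -(Cw_even wf st E w j); apply: afin.
have aAD : forall v w, v <> w -> finite_set (a v `&` a w).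
  move=> v w nvw; case: (tot v w nvw) => lt.
    have [k ek] := Cw_pred wf cpred st hE lt.
    have -> : a v = Cw' w k.*2.+1 by rewrite /a /Cw' ek.
    by rewrite setIC; apply: afin.
  have [k ek] := Cw_pred wf cpred st hE lt.
  have -> : a w = Cw' v k.*2.+1 by rewrite /a /Cw' ek.
  by apply: afin.
have ainj : forall v w, a v = a w -> v = w.
  move=> v w e; apply: contrapT => nvw; apply: (ainf v).
  by have := aAD v w nvw; rewrite e setIid.
pose Afam := [set c | (exists j, c = seed j) \/ exists w, c = a w].
have seed_inj : injective seed.
  move=> j j' e; have : seed j (pickle (j, 0%N)) by exists 0%N.
  by rewrite e => /(seed_disj (ex_intro _ 0%N erefl)) ->.
have hAD : forall u v, Afam u -> Afam v -> u <> v -> finite_set (u `&` v).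
  move=> u v [[j ->]|[w ->]] [[j' ->]|[w' ->]] nuv.
  - apply: fin_empty => m [s1 s2]; apply: nuv; congr seed; exact: seed_disj s1 s2.
  - by rewrite setIC; apply: aseed.
  - exact: aseed.
  - by apply: aAD => e; apply: nuv; rewrite e.
exists Afam; split.
- split.
  + apply: (sub_infinite_set (A := seed @` setT)); first by move=> c [j _ <-]; left; exists j.
    by apply: infinite_inj_img; [exact: infinite_nat|move=> u v _ _; apply: seed_inj].
  + by move=> c [[j ->]|[w ->]]; [exact: seed_inf|exact: ainf].
  + exact: hAD.
- move=> cM; apply: unc; apply/countable_injP.
  have [f finj] := countable_injP _ cM.
  have Aw : forall w, Afam (a w) by move=> w; right; exists w.
  exists (fun w => f (MA (exist _ (a w) (Aw w)))) => v w _ _ e.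
  have := finj _ _ (in_setT _) (in_setT _) e.
  move=> /(congr1 (fun z : mrowka Afam => match z with MA b => proj1_sig b | _ => set0 end)) /=.
  exact: ainj.
- split; first exact: mrowka_hausdorff.
  apply: finbw_core => // D g.
  have [S eS] := decs D g; have [w ew] := phis S.
  exists (Cw' w), (a w); split.
  + by right; exists w.
  + move=> k; have := odd_double_half k; case: (odd k) => /= <-.
      rewrite add1n /Cw'; case: (Cw_odd wf cpred st hE w k./2) => [->|[v [_ ->]]]; first by right.
      by left; right; exists v.
    by left; left; exists k./2; rewrite add0n /Cw' Cw_even.
  + by have := out w; rewrite ew eS.
Qed.
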